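(* Assume the discrete inf-sup condition: there is $\kappa>0$ such that $$\kappa\|w\|_W\le\sup_{v_\eta\in V_\eta,\ v_\eta\neq0}\frac{\mathcal{A}(w,v_\eta)}{\|v_\eta\|_V}\quad\text{for all } w\in W_\theta\cup S_\theta.$$ Let $(w^n_\theta)\subset W_\theta$ be a minimizing sequence, i.e. $\lim_n\|u-w^n_\theta\|_{op,\eta}=\inf_{w_\theta\in W_\theta}\|u-w_\theta\|_{op,\eta}$. Then $(w^n_\theta)$ has a subsequence converging weakly in $W$ to some $u^*_\theta\in\mathrm{cl}^{seq}_w(W_\theta)$, and every such weak limit satisfies $\|u-u^*_\theta\|_{op,\eta}\le\|u-w_\theta\|_{op,\eta}$ for all $w_\theta\in W_\theta$.
   Context: $W$ and $V$ are reflexive separable real Banach spaces. $\mathcal{A}:W\times V\to\mathbb{R}$ is a bilinear form with $\mathcal{A}(w,v)\le M\|w\|_W\|v\|_V$, $\mathcal{F}:V\to\mathbb{R}$ is bounded linear, and $u\in W$ is the unique solution of $\mathcal{A}(u,v)=\mathcal{F}(v)$ for all $v\in V$. $W_\theta\subseteq W$ and $V_\eta\subseteq V$ are arbitrary subsets, $V_\eta$ containing an element of nonzero norm. For $w\in W$, $\|w\|_{op,\eta}:=\sup_{v_\eta\in V_\eta,\ \|v_\eta\|_V\neq0}\mathcal{A}(w,v_\eta)/\|v_\eta\|_V$. $S_\theta:=\{w_1-w_2:\ w_1,w_2\in W_\theta\}$. $\mathrm{cl}^{seq}_w(W_\theta)$ is the set of all weak limits in $W$ of sequences in $W_\theta$.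 *)

(* Defs.v *)
From HB Require Import structures.
From mathcomp Require Import all_boot all_order all_algebra.
From mathcomp Require Import all_classical all_reals all_analysis.
Set Implicit Arguments. Unset Strict Implicit. Unset Printing Implicit Defensive.
Import Order.TTheory GRing.Theory Num.Theory.
Import numFieldNormedType.Exports.
Local Open Scope classical_set_scope.
Local Open Scope ring_scope.

Section Defs.
Variable R : realType.

Definition is_clf (W : normedModType R) (f : W -> R) : Prop :=
  (forall (a : R) (x y : W), f (a *: x + y) = a * f x + f y) /\ continuous f.

Definition weak_cvg (W : normedModType R) (x : nat -> W) (y : W) : Prop :=
  forall f : W -> R, is_clf f -> (fun n => f (x n)) @ \oo --> f y.

Definition separable (W : normedModType R) : Prop :=
  exists D : set W, countable D /\ closure D = setT.

(** reflexive: every bounded linear functional on the dual W' (with the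
    operator norm) is the evaluation at some element of W *)
Definition reflexive_space (W : normedModType R) : Prop :=
  forall Phi : (W -> R) -> R,
    (forall (a : R) (f g : W -> R), is_clf f -> is_clf g ->
        Phi (fun x => a * f x + g x) = a * Phi f + Phi g) ->
    (exists C : R, forall (f : W -> R) (M : R), is_clf f -> 0 <= M ->
        (forall x, `|f x| <= M * `|x|) -> `|Phi f| <= C * M) ->
    exists w : W, forall f, is_clf f -> Phi f = f w.

Definition bilinear_form (W V : normedModType R) (A : W -> V -> R) : Prop :=
  (forall (a : R) (w1 w2 : W) (v : V), A (a *: w1 + w2) v = a * A w1 v + A w2 v) /\
  (forall (a : R) (w : W) (v1 v2 : V), A w (a *: v1 + v2) = a * A w v1 + A w v2).

Definition bounded_linear_functional (V : normedModType R) (F : V -> R) : Prop :=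
  (forall (a : R) (x y : V), F (a *: x + y) = a * F x + F y) /\
  exists C : R, forall v, `|F v| <= C * `|v|.

Definition opnorm (W V : normedModType R) (A : W -> V -> R) (Veta : set V)
  (w : W) : \bar R :=
  ereal_sup [set ((A w v) / `|v|)%:E | v in [set v | Veta v /\ `|v| != 0]].

Definition diffset (W : normedModType R) (Wt : set W) : set W :=
  [set x | exists w1 w2, Wt w1 /\ Wt w2 /\ x = w1 - w2].

Definition wseqcl (W : normedModType R) (Wt : set W) : set W :=
  [set w | exists x : nat -> W, (forall n, Wt (x n)) /\ weak_cvg x w].

End Defs.

(* Main.v *)
Require Import Defs.
From HB Require Import structures.
From mathcomp Require Import all_boot all_order all_algebra.
From mathcomp Require Import all_classical all_reals all_analysis.
From mathcomp Require Import ring lra.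
Import Order.TTheory GRing.Theory Num.Theory.
Import numFieldNormedType.Exports.
Local Open Scope classical_set_scope.
Local Open Scope ring_scope.
Set Implicit Arguments. Unset Strict Implicit. Unset Printing Implicit Defensive.
Section Aux.
Variable R : realType.

Lemma lin0 (W : normedModType R) (f : W -> R) :
  (forall (a : R) (x y : W), f (a *: x + y) = a * f x + f y) -> f 0 = 0.
Proof.
move=> lin; have := lin 1 0 0; rewrite scale1r addr0 mul1r => H.
by apply: (addrI (f 0)); rewrite addr0 -H.
Qed.

Lemma linZ (W : normedModType R) (f : W -> R) :
  (forall (a : R) (x y : W), f (a *: x + y) = a * f x + f y) ->
  forall a x, f (a *: x) = a * f x.
Proof. by move=> lin a x; have := lin a x 0; rewrite addr0 (lin0 lin) addr0. Qed.

Lemma clf_bounded (W : normedModType R) (f : W -> R) :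
  is_clf f -> exists C, 0 < C /\ forall x, `|f x| <= C * `|x|.
Proof.
move=> [lin cont].
have /cvgrPdist_lt /(_ 1 ltr01) := cont 0.
rewrite (lin0 lin) => /nbhs_ballP [d /= d0 Hd].
exists (2 / d); split; first by rewrite divr_gt0.
move=> x; have [->|x0] := eqVneq x 0; first by rewrite (lin0 lin) normr0 normr0 mulr0.
have nx0 : 0 < `|x| by rewrite normr_gt0.
have : ball (0:W) d ((d / 2 / `|x|) *: x).
  rewrite -ball_normE /= sub0r normrN normrZ ger0_norm; last first.
    by rewrite divr_ge0 // ?divr_ge0 // ltW.
  rewrite divfK ?gt_eqF //; lra.

move/Hd; rewrite /= sub0r normrN (linZ lin) normrM ger0_norm; last first.
  by rewrite divr_ge0 // ?divr_ge0 // ltW.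
move=> H; rewrite -(@ler_pM2l _ (d / 2 / `|x|)); last by rewrite !divr_gt0.
apply: ltW; apply: (lt_le_trans H).
have -> : d / 2 / `|x| * (2 / d * `|x|) = 1.
  field; rewrite ?gt_eqF //.
by [].
Qed.

Lemma linB (W : normedModType R) (f : W -> R) :
  (forall (a : R) (x y : W), f (a *: x + y) = a * f x + f y) ->
  forall x y, f (x - y) = f x - f y.
Proof.
move=> lin x y; have := lin (-1) y x; rewrite scaleN1r mulN1r => H.
by rewrite addrC H addrC.
Qed.

Lemma bdlin_clf (W : normedModType R) (f : W -> R) (C : R) :
  (forall (a : R) (x y : W), f (a *: x + y) = a * f x + f y) ->
  (forall x, `|f x| <= C * `|x|) -> is_clf f.
Proof.
move=> lin bd; split => // x; apply/cvgrPdist_lt => e e0.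
have C1 : 0 < `|C| + 1 by rewrite ltr_pwDr // normr_ge0.
apply/nbhs_ballP; exists (e / (`|C| + 1)); first by rewrite /= divr_gt0.
move=> t; rewrite -ball_normE /= -(linB lin) => H.
apply: (le_lt_trans (bd _)); apply: (le_lt_trans (ler_norm _)).
rewrite normrM normr_id.
apply: (@le_lt_trans _ _ ((`|C| + 1) * `|x - t|)).
  by rewrite ler_wpM2r // lerDl.
by rewrite -ltr_pdivlMl // mulrC.
Qed.

Lemma ultra_fmap (T U : Type) (G : set_system T) (a : T -> U) :
  UltraFilter G -> UltraFilter (a @ G).
Proof.
move=> UG; split; first exact: fmap_proper_filter.
move=> H PH sub; rewrite predeqE => P; split; last exact: sub.
move=> HP; have [//|GnP] := in_ultra_setVsetC (a @^-1` P) UG.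
have HnP : H (~` P) by apply: sub.
have : H (P `&` ~` P) by exact: filterI.
by rewrite setICr => /filter_ex [].
Qed.

Lemma ultra_lim_bd (G : set_system nat) (a : nat -> R) (B : R) :
  UltraFilter G -> (forall n, `|a n| <= B) -> exists l : R, a @ G --> l.
Proof.
move=> UG bd; have := @segment_compact R (- B) B.
rewrite compact_ultra => /(_ (a @ G) (ultra_fmap a UG)).
have GA : (a @ G) `[- B, B]%classic.
  by apply: (@filterE _ G) => n /=; rewrite in_itv /= -ler_norml.
by move=> /(_ GA) [l [_ Hl]]; exists l.
Qed.

Lemma cvg_abs_le (G : set_system nat) (a : nat -> R) (l B : R) :
  ProperFilter G -> (forall n, `|a n| <= B) -> a @ G --> l -> `|l| <= B.
Proof.
move=> PG bd al; rewrite ler_norml; apply/andP; split.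
  apply: (cvgr_to_ge al); apply: filterE => n; by have := bd n; rewrite ler_norml => /andP[].
apply: (cvgr_to_le al); apply: filterE => n; by have := bd n; rewrite ler_norml => /andP[].
Qed.

Lemma refl_point (W : normedModType R) (z : nat -> W) (K : R) (G : set_system nat) :
  reflexive_space W -> UltraFilter G -> (forall n, `|z n| <= K) ->
  exists p : W, forall g, is_clf g -> (fun n => g (z n)) @ G --> g p.
Proof.
move=> hW UG bd.
have lims : forall g, is_clf g -> exists l : R, (fun n => g (z n)) @ G --> l.
  move=> g /clf_bounded [C [C0 HC]]; apply: (@ultra_lim_bd _ _ (C * K)) => // n.
  by apply: (le_trans (HC _)); rewrite ler_wpM2l // ltW.
pose Phi (g : W -> R) := lim ((fun n => g (z n)) @ G).
have PhiE : forall g l, (fun n => g (z n)) @ G --> l -> Phi g = l.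
  by move=> g l gl; apply: (cvg_lim (@Rhausdorff R)).
have [p Hp] : exists p : W, forall f, is_clf f -> Phi f = f p.
  apply: hW.
    move=> a f g cf cg; have [lf Hf] := lims f cf; have [lg Hg] := lims g cg.
    rewrite (PhiE _ _ Hf) (PhiE _ _ Hg); apply: PhiE.
    by apply: cvgD => //; apply: cvgMr.
  exists K => f M cf M0 bdf; have [lf Hf] := lims f cf; rewrite (PhiE _ _ Hf).
  apply: (cvg_abs_le _ _ Hf) => n; apply: (le_trans (bdf _)).
  by rewrite mulrC ler_wpM2r.
exists p => g cg; have [l Hl] := lims g cg.
by rewrite -Hp // (PhiE _ _ Hl).
Qed.

Definition islin (W : normedModType R) (f : W -> R) :=
  forall (a : R) (x y : W), f (a *: x + y) = a * f x + f y.

Lemma sep_family (W : normedModType R) : separable W ->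
  exists f : nat -> W -> R, (forall k, is_clf (f k)) /\
    forall d, (forall k, f k d = 0) -> forall g, is_clf g -> g d = 0.
Proof.
move=> [D [cD clD]].
have [w sw] : exists w : nat -> W, set_surj setT D w by exact/pcard_surjP.
have dense : forall d (e : R), 0 < e -> exists k, `|d - w k| < e.
  move=> d e e0; have : closure D d by rewrite clD.
  move=> /(_ _ (nbhsx_ballx d e e0)) [x [Dx bx]].
  have [k _ wk] := sw x Dx; exists k; rewrite wk.
  by move: bx; rewrite -ball_normE.
pose B1 := [set f : W -> R | islin f /\ forall x, `|f x| <= `|x|].
have B10 : B1 (fun _ => 0).
  by split => [a x y|x]; rewrite ?mulr0 ?addr0 // normr0 normr_ge0.
have pick : forall k, exists f, B1 f /\ forall g, B1 g -> g (w k) <= 2 * f (w k).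
  move=> k; pose S := [set f (w k) | f in B1].
  have hS : has_sup S.
    split; first by exists 0, (fun _ => 0).
    by exists `|w k| => _ [f [_ bf] <-]; apply: le_trans (ler_norm _) (bf _).
  have [s0|s0] := leP (sup S) 0.
    exists (fun _ => 0); split => // g Bg; rewrite mulr0.
    by apply: le_trans s0; apply: sup_upper_bound => //; exists g.
  have [_ [f Bf <-] Hf] := sup_adherent (divr_gt0 s0 (ltr0Sn _ 1)) hS.
  exists f; split => // g Bg.
  have : g (w k) <= sup S by apply: sup_upper_bound => //; exists g.
  move=> H; apply: (le_trans H); move: Hf; lra.
have [f Hf] := choice pick.
exists f; split.
  move=> k; have [[lk bk] _] := Hf k; apply: (@bdlin_clf _ _ 1) => // x.
  by rewrite mul1r.
move=> d fd.
have key : forall h, B1 h -> h d <= 0.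
  move=> h [lh bh]; apply/ler_addgt0Pr => e e0; rewrite add0r.
  have e30 : 0 < e / 3 by rewrite divr_gt0.
  have [k hk] := dense d _ e30.
  have [[lk bk] Hk] := Hf k.
  have h1 : h d <= h (w k) + e / 3.
    have -> : h d = h (w k) + h (d - w k) by rewrite (linB lh) addrC subrK.
    by rewrite lerD2l; apply: le_trans (ler_norm _) (le_trans (bh _) (ltW hk)).
  have h2 : h (w k) <= 2 * f k (w k) by apply: Hk.
  have h3 : f k (w k) <= e / 3.
    have -> : f k (w k) = f k (w k - d) by rewrite (linB lk) fd subr0.
    apply: le_trans (ler_norm _) (le_trans (bk _) _).
    by rewrite distrC ltW.
  lra.
move=> g cg; have [C [C0 HC]] := clf_bounded cg; have [lg _] := cg.
have B1g : B1 (fun x => g x / C).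
  split.
    by move=> a x y; rewrite lg mulrDl mulrA.
  move=> x; rewrite normrM normfV (gtr0_norm C0) ler_pdivrMr // mulrC.
  exact: HC.
have B1ng : B1 (fun x => - (g x / C)).
  split.
    by move=> a x y; rewrite lg; ring.
  move=> x; rewrite normrN; case: B1g => _; exact.
have := key _ B1g; have := key _ B1ng => /=.
rewrite oppr_le0 => H1 H2.
have : g d / C = 0 by apply/eqP; rewrite eq_le H2 H1.
by move/eqP; rewrite mulf_eq0 invr_eq0 (gt_eqF C0) orbF => /eqP.
Qed.

Lemma weak_seq_compact (W : normedModType R) (z : nat -> W) (K : R) :
  reflexive_space W -> separable W -> (forall n, `|z n| <= K) ->
  exists phi : nat -> nat, {homo phi : m n / (m < n)%N >-> (m < n)%N} /\
    exists p, weak_cvg (z \o phi) p.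
Proof.
move=> hWr hWs bd.
have [f [cf sepf]] := sep_family hWs.
have [U [UU sub]] := @ultraFilterLemma nat eventually _.
have PU : ProperFilter U by case: UU.
have [p Hp] := refl_point hWr UU bd.
have Tn : forall e : R, 0 < e -> forall n,
    U [set m | forall k, (k <= n)%N -> `|f k p - f k (z m)| < e].
  move=> e e0; elim => [|n IH].
    have /cvgrPdist_lt /(_ e e0) := Hp _ (cf 0%N).
    by apply: filterS => m Hm k; rewrite leqn0 => /eqP ->.
  have /cvgrPdist_lt /(_ e e0) H := Hp _ (cf n.+1).
  apply: filterS (filterI IH H) => m [H1 H2] k.
  by rewrite leq_eqVlt => /orP[/eqP->|]; [exact: H2|rewrite ltnS; exact: H1].
have UN : forall N, U [set m | (N <= m)%N] by move=> N; apply: sub; exact: nbhs_infty_ge.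
have cex : forall nN : nat * nat, exists m, (nN.2 <= m)%N /\
    forall k, (k <= nN.1)%N -> `|f k p - f k (z m)| < nN.1.+1%:R^-1.
  move=> [n N] /=.
  have hn : 0 < n.+1%:R^-1 :> R by rewrite invr_gt0 ltr0Sn.
  have H : U ([set m | (N <= m)%N] `&` [set m | forall k, (k <= n)%N -> `|f k p - f k (z m)| < n.+1%:R^-1])
    by apply: filterI; [exact: UN|exact: Tn].
  have [m [H1 H2]] := filter_ex H.
  by exists m.
have [c Hc] := choice cex.
pose phi := fix phi (n : nat) : nat :=
  if n is n'.+1 then c (n, (phi n').+1) else c (0%N, 0%N).
have phiS : forall n, (phi n < phi n.+1)%N by move=> n; have [] := Hc (n.+1, (phi n).+1).
have phiP : forall n k, (k <= n)%N -> `|f k p - f k (z (phi n))| < n.+1%:R^-1.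
  by case => [|n] k kn; [have [_] := Hc (0%N, 0%N)|have [_] := Hc (n.+1, (phi n).+1)]; apply.
have homo : {homo phi : m n / (m < n)%N >-> (m < n)%N}.
  by apply: homo_ltn => //; exact: ltn_trans.
exists phi; split => //; exists p.
have fkc : forall k, (fun n => f k (z (phi n))) @ \oo --> f k p.
  move=> k; apply/cvgrPdist_lt => e e0.
  near=> n.
  have kn : (k <= n)%N by near: n; exact: nbhs_infty_ge.
  apply: (lt_trans (phiP _ _ kn)).
  near: n; exact: (near_infty_natSinv_lt (PosNum e0)).
move=> g cg; apply: contrapT => ncv.
have : ~ (forall e : R, 0 < e ->
    \forall n \near \oo, `|g p - g (z (phi n))| < e).
  by move=> H; apply: ncv; apply/cvgrPdist_lt.
move=> /existsNP [e] /not_implyP [e0 He].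
pose S := [set n | e <= `|g p - g (z (phi n))|].
have PF : ProperFilter (within S eventually).
  apply: Build_ProperFilter_ex => // P [N _ HN].
  apply: contrapT => nex; apply: He; exists N => // n /= Nn.
  rewrite ltNge; apply/negP => Sn; apply: nex; exists n.
  by apply: (HN n Nn).
have [U' [UU' sub']] := ultraFilterLemma PF.
have PU' : ProperFilter U' by case: UU'.
have bd' : forall n, `|(z \o phi) n| <= K by move=> n; exact: bd.
have [q Hq] := refl_point hWr UU' bd'.
have toU : forall (a : nat -> R) (l : R), a @ \oo --> l -> a @ U' --> l.
  move=> a l al; have H := @cvg_within_filter _ _ a _ _ _ S al.
  by move=> A nA; apply: sub'; exact: H.
have fkq : forall k, f k q = f k p.
  move=> k; apply: (cvg_unique (@Rhausdorff R) (Hq _ (cf k))).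
  exact: (toU _ _ (fkc k)).
have gqp : g q = g p.
  have : g (q - p) = 0.
    apply: (sepf _ _ g cg) => k; have [lk _] := cf k.
    by rewrite (linB lk) fkq subrr.
  have [lg _] := cg; rewrite (linB lg) => /eqP; rewrite subr_eq0 => /eqP //.
have Hcv : (fun n => `|g p - g (z (phi n))|) @ U' --> `|g p - g q|.
  apply: cvg_norm; apply: cvgB; first exact: cvg_cst.
  exact: (Hq _ cg).
have : e <= `|g p - g q|.
  apply: (cvgr_to_ge Hcv); apply: sub'; exact: nearW.
by rewrite gqp subrr normr0 => /(lt_le_trans e0); rewrite ltxx.
Unshelve. all: by end_near.
Qed.

Lemma opnorm_ub (W V : normedModType R) (A : W -> V -> R) (Veta : set V) w v :
  Veta v -> `|v| != 0 -> (((A w v) / `|v|)%:E <= opnorm A Veta w)%E.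
Proof. by move=> Vv v0; apply: ereal_sup_ubound; exists v. Qed.

Lemma opnorm_le (W V : normedModType R) (A : W -> V -> R) (Veta : set V) w
  (b : \bar R) : (forall v, Veta v -> `|v| != 0 -> (((A w v) / `|v|)%:E <= b)%E) ->
  (opnorm A Veta w <= b)%E.
Proof. by move=> H; apply: ub_ereal_sup => _ [v [Vv v0] <-]; exact: H. Qed.

Lemma incr_ge (phi : nat -> nat) : {homo phi : m n / (m < n)%N >-> (m < n)%N} ->
  forall n, (n <= phi n)%N.
Proof.
move=> h; elim => [//|n IH]; apply: leq_ltn_trans IH _; exact: h.
Qed.

End Aux.
Unset Implicit Arguments.

Theorem mainTheorem4 (R : realType)
  (W V : completeNormedModType R)
  (hWr : reflexive_space W) (hWs : separable W)
  (hVr : reflexive_space V) (hVs : separable V)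
  (A : W -> V -> R) (M : R)
  (hA : bilinear_form A)
  (hAM : forall (w : W) (v : V), A w v <= M * `|w| * `|v|)
  (F : V -> R) (hF : bounded_linear_functional F)
  (u : W) (hu : forall v, A u v = F v)
  (hu_uniq : forall w : W, (forall v, A w v = F v) -> w = u)
  (Wt : set W) (Veta : set V)
  (hVeta : exists v, Veta v /\ `|v| != 0)
  (hinfsup : exists kappa : R, 0 < kappa /\
     forall w : W, Wt w \/ diffset Wt w ->
       ((kappa * `|w|)%:E <= opnorm A Veta w)%E)
  (wn : nat -> W) (hwn : forall n, Wt (wn n))
  (hmin : (fun n => opnorm A Veta (u - wn n)) @ \oo -->
            ereal_inf [set opnorm A Veta (u - w) | w in Wt]) :
  (exists (phi : nat -> nat) (ustar : W),
      {homo phi : m n / (m < n)%N >-> (m < n)%N} /\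
      weak_cvg (wn \o phi) ustar /\ wseqcl Wt ustar) /\
  (forall (phi : nat -> nat) (ustar : W),
      {homo phi : m n / (m < n)%N >-> (m < n)%N} ->
      weak_cvg (wn \o phi) ustar ->
      forall w, Wt w -> (opnorm A Veta (u - ustar)%R <= opnorm A Veta (u - w)%R)%E).
Proof.
have linA : forall v, islin (fun x => A x v) by move=> v a x y; case: hA => h _; exact: h.
have AB : forall x y v, A (x - y) v = A x v - A y v by move=> x y v; exact: (linB (linA v)).
have Aabs : forall w v, `|A w v| <= M * `|w| * `|v|.
  move=> w v; rewrite ler_norml hAM andbT.
  have := hAM (- w) v; rewrite normrN -(sub0r w) AB (lin0 (linA v)) sub0r.
  by rewrite lerNl.
have opM : forall w, (opnorm A Veta w <= (M * `|w|)%:E)%E.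
  move=> w; apply: opnorm_le => v1 _ v0; rewrite lee_fin ler_pdivrMr; [exact: hAM|by rewrite lt0r v0 normr_ge0].
pose L := ereal_inf [set opnorm A Veta (u - w) | w in Wt].
have Aclf : forall v, is_clf (fun x => A x v).
  move=> v; apply: (@bdlin_clf _ _ _ (M * `|v|)); first exact: linA.
  by move=> x; rewrite mulrAC.
split.
  have [kappa [k0 hk]] := hinfsup.
  pose w0 := wn 0%N.
  pose B := M * `|u - w0| + 1.
  have LB : (L < B%:E)%E.
    have L1 : (L <= opnorm A Veta (u - w0)%R)%E.
      by apply: ereal_inf_lbound; exists w0 => //; exact: hwn.
    apply: (le_lt_trans L1); apply: (le_lt_trans (opM _)).
    by rewrite lte_fin /B; lra.
  have [N _ HN] : \forall n \near \oo, (opnorm A Veta (u - wn n)%R < B%:E)%E.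
    apply: (hmin [set y | (y < B%:E)%E]); apply: open_nbhs_nbhs; split; [exact: open_ereal_lt_ereal|exact: LB].
  have sub : forall x y, (opnorm A Veta (x + y)%R <= opnorm A Veta x + opnorm A Veta y)%E.
    move=> x y; apply: opnorm_le => v Vv v0.
    have -> : A (x + y) v = A x v + A y v by have := linA v 1 x y; rewrite scale1r mul1r.
    by rewrite mulrDl EFinD; apply: leeD; apply: opnorm_ub.
  have bd : forall n, `|wn (n + N)%N| <= `|w0| + (M * `|w0 - u| + B) / kappa.
    move=> n; set m := (n + N)%N.
    have h1 := hk (w0 - wn m) (or_intror (ex_intro _ w0 (ex_intro _ (wn m)
       (conj (hwn 0%N) (conj (hwn m) erefl))))).
    have h2 : (opnorm A Veta (w0 - wn m)%R <= (M * `|w0 - u|)%:E + B%:E)%E.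
      have -> : w0 - wn m = (w0 - u) + (u - wn m) by rewrite addrA subrK.
      apply: (le_trans (sub _ _)); apply: leeD; first exact: opM.
      apply: ltW; apply: HN; rewrite /m; exact: leq_addl.
    have h3 := le_trans h1 h2; rewrite -EFinD lee_fin in h3.
    have h4 : `|w0 - wn m| <= (M * `|w0 - u| + B) / kappa.
      by rewrite ler_pdivlMr // mulrC.
    have -> : wn m = w0 - (w0 - wn m) by rewrite opprB addrC subrK.
    apply: (le_trans (ler_normB _ _)); exact: lerD.
  have := weak_seq_compact hWr hWs bd; case=> psi [hpsi [p hp]].
  exists (fun n => (psi n + N)%N). exists p. split.
    by move=> m n mn; rewrite ltn_add2r; exact: hpsi.
  split; first exact: hp.
  by exists (wn \o (fun n => (psi n + N)%N)); split => // n; exact: hwn.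
move=> phi ustar hphi hw w Wtw.
have xc : (fun n => opnorm A Veta (u - wn (phi n))) @ \oo --> L.
  move=> P /hmin [N _ HN]; exists N => // n /= Nn.
  apply: HN => /=; apply: leq_trans Nn (incr_ge hphi n).
apply: opnorm_le => v Vv v0.
have ac : (fun n => (A (u - wn (phi n)) v) / `|v|) @ \oo --> (A (u - ustar) v) / `|v|.
  apply: cvgMl; under eq_fun do rewrite AB; rewrite AB.
  apply: cvgB; first exact: cvg_cst.
  exact: (hw _ (Aclf v)).
have ace : (fun n => ((A (u - wn (phi n)) v) / `|v|)%:E) @ \oo --> ((A (u - ustar) v) / `|v|)%:E.
  by apply: cvg_EFin; [exact: nearW|exact: ac].
have hle : \forall n \near \oo, ((A (u - wn (phi n))%R v / `|v|)%R%:E <= opnorm A Veta (u - wn (phi n))%R)%E.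
  by apply: nearW => n; exact: opnorm_ub.
have := lee_lim (cvgP _ ace) (cvgP _ xc) hle.
rewrite (cvg_lim (@ereal_hausdorff R) ace) (cvg_lim (@ereal_hausdorff R) xc) => H.
apply: (le_trans (H _)); apply: ereal_inf_lbound; exists w => //.
Qed.
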